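(* Let $\mathbf{G}$ be the graph with vertex set consisting of $\mathbb{Z}_+=\{0,1,2,\dots\}$ together with additional vertices such that, for each $n\ge0$, $n$ and $n+1$ are joined by $2^n$ disjoint paths of length $2$ (each through its own new middle vertex), and there are no other edges. Then $\mathbf{G}$ is transient, but two independent simple random walks on $\mathbf{G}$ started from the same vertex meet infinitely many times almost surely. *)

(* Defs.v *)
From mathcomp Require Import all_boot all_order all_algebra.
Set Implicit Arguments. Unset Strict Implicit. Unset Printing Implicit Defensive.
Import Order.TTheory GRing.Theory Num.Theory.
Local Open Scope ring_scope.

(* Vertices of G: [inl n] is the integer vertex n in Z_+;
   [inr (n, i)] is the middle vertex of the i-th path of length 2 joining
   n and n+1 (meaningful only for i < 2^n). *)
Definition vertex : Type := (nat + (nat * nat))%type.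

Definition valid_vertex (v : vertex) : bool :=
  match v with inl _ => true | inr (n, i) => (i < 2 ^ n)%N end.

Definition G_adj (x y : vertex) : bool :=
  match x, y with
  | inl m, inr (n, i) => ((i < 2 ^ n)%N && ((m == n) || (m == n.+1)))
  | inr (n, i), inl m => ((i < 2 ^ n)%N && ((m == n) || (m == n.+1)))
  | _, _ => false
  end.

Definition nbrs (x : vertex) : seq vertex :=
  match x with
  | inl n =>
      [seq inr (n, i) | i <- iota 0 (2 ^ n)] ++
      (if n is m.+1 then [seq inr (m, i) | i <- iota 0 (2 ^ m)] else [::])
  | inr (n, _) => [:: inl n; inl n.+1]
  end.

(* All trajectories of length n (n steps, n+1 vertices, starting at v) of
   simple random walk on G, each with its probability
   prod_t 1/deg(X_t). *)
Fixpoint walks (v : vertex) (n : nat) : seq (seq vertex * rat) :=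
  match n with
  | 0 => [:: ([:: v], 1)]
  | n'.+1 =>
      flatten [seq [seq (rcons p.1 y, p.2 / (size (nbrs (last v p.1)))%:R)
                   | y <- nbrs (last v p.1)]
              | p <- walks v n']
  end.

(* P_v( SRW returns to v at some time t in {1,...,n} ). *)
Definition return_prob (v : vertex) (n : nat) : rat :=
  \sum_(p <- walks v n) (if has (pred1 v) (behead p.1) then p.2 else 0).

Definition meetings (v : vertex) (n : nat) (p q : seq vertex) : nat :=
  count (fun t => nth v p t == nth v q t) (iota 1 n).

(* For two independent SRWs X, Y both started at v:
   P( #{t in 1..n : X_t = Y_t} >= k ). *)
Definition meet_prob (v : vertex) (k n : nat) : rat :=
  \sum_(p <- walks v n) \sum_(q <- walks v n)
     (if (k <= meetings v n p.1 q.1)%N then p.2 * q.2 else 0).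

(* Transience: for every vertex v, P_v(ever return to v) < 1, where
   P_v(ever return) = sup_n return_prob v n (continuity of measure). *)
Definition G_transient : Prop :=
  forall v : vertex, valid_vertex v ->
    exists eps : rat, 0 < eps /\ forall n, return_prob v n <= 1 - eps.

(* Two independent SRWs from the same vertex meet infinitely often a.s.:
   P(infinitely many meetings) = inf_k sup_n meet_prob v k n = 1. *)
Definition G_meet_io_as : Prop :=
  forall v : vertex, valid_vertex v ->
    forall (k : nat) (eps : rat), 0 < eps ->
      exists n, 1 - eps <= meet_prob v k n.

(* Main.v *)
Require Import Defs.
From mathcomp Require Import all_boot all_order all_algebra.
From mathcomp Require Import zify ring lra.
Set Implicit Arguments. Unset Strict Implicit. Unset Printing Implicit Defensive.
Import Order.TTheory GRing.Theory Num.Theory.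
Local Open Scope ring_scope.

Definition deg (x : vertex) : nat := size (nbrs x).

Lemma deg_gt0 x : (0 < deg x)%N.
Proof.
case: x => [n|[n i]] //=; rewrite /deg /= size_cat size_map size_iota.
by rewrite addn_gt0 expn_gt0.
Qed.

Lemma deg_neq0 x : (deg x)%:R != 0 :> rat.
Proof. by rewrite pnatr_eq0 -lt0n deg_gt0. Qed.

Lemma sum_const_seq (T : Type) (s : seq T) (c : rat) :
  \sum_(i <- s) c = (size s)%:R * c.
Proof.
elim: s => [|a s IH]; first by rewrite big_nil mul0r.
by rewrite big_cons IH /= -add1n natrD mulrDl mul1r.
Qed.

Lemma sum_flatten (A : Type) (s : seq (seq A)) (F : A -> rat) :
  \sum_(i <- flatten s) F i = \sum_(j <- s) \sum_(i <- j) F i.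
Proof.
elim: s => [|a s IH]; first by rewrite !big_nil.
by rewrite /= big_cat IH big_cons.
Qed.

Definition E (v : vertex) (n : nat) (F : seq vertex -> rat) : rat :=
  \sum_(p <- walks v n) p.2 * F p.1.

Lemma walks_head v n p : p \in walks v n -> exists r, p.1 = v :: r.
Proof.
elim: n p => [|n IH] p /=.
  by rewrite inE => /eqP ->; exists [::].
case/flatten_mapP => q /IH [r hr] /mapP [y _ ->] /=.
by rewrite hr; exists (rcons r y).
Qed.

Lemma E_ext v n F G : (forall p, p \in walks v n -> F p.1 = G p.1) ->
  E v n F = E v n G.
Proof. by move=> h; apply: eq_big_seq => p /h ->. Qed.

Lemma E0 v F : E v 0 F = F [:: v].
Proof. by rewrite /E /= big_seq1 mul1r. Qed.

Lemma E_end v n F : E v n.+1 F =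
  E v n (fun p => (deg (last v p))%:R^-1 * \sum_(y <- nbrs (last v p)) F (rcons p y)).
Proof.
rewrite /E [walks _ _.+1]/= sum_flatten big_map; apply: eq_bigr => p _.
rewrite big_map !mulr_sumr; apply: eq_bigr => y _ /=.
by rewrite mulrA.
Qed.

Lemma E_first v n F : E v n.+1 F =
  (deg v)%:R^-1 * \sum_(y <- nbrs v) E y n (fun p => F (v :: p)).
Proof.
elim: n F => [|n IH] F.
  rewrite E_end E0 /=; congr (_ * _); apply: eq_bigr => y _.
  by rewrite E0.
rewrite E_end IH; congr (_ * _); apply: eq_bigr => y _.
rewrite E_end; apply: E_ext => p /walks_head [r ->] /=.
by [].
Qed.

Lemma E_one v n : E v n (fun _ => 1) = 1.
Proof.
elim: n v => [|n IH] v; first by rewrite E0.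
rewrite E_first; under eq_bigr do rewrite IH.
by rewrite sum_const_seq mulr1 mulVf ?deg_neq0.
Qed.

Lemma E_scale v n c F : E v n (fun p => c * F p) = c * E v n F.
Proof.
by rewrite /E mulr_sumr; apply: eq_bigr => p _; rewrite mulrCA.
Qed.

Lemma E_sum (T : Type) v n (s : seq T) (F : T -> seq vertex -> rat) :
  E v n (fun p => \sum_(i <- s) F i p) = \sum_(i <- s) E v n (F i).
Proof.
rewrite /E exchange_big /=; apply: eq_bigr => p _.
by rewrite mulr_sumr.
Qed.

Definition Rh (v : vertex) n x := E x n (fun p => (has (pred1 v) p)%:R).

Lemma return_probE v n : return_prob v n.+1 =
  (deg v)%:R^-1 * \sum_(y <- nbrs v) Rh v n y.
Proof.
have -> : return_prob v n.+1 = E v n.+1 (fun p => (has (pred1 v) (behead p))%:R).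
  by apply: eq_bigr => p _; case: ifP; rewrite ?mulr1 ?mulr0.
by rewrite E_first.
Qed.

Lemma return_prob0 v : return_prob v 0 = 0.
Proof. by rewrite /return_prob /= big_seq1. Qed.

Lemma Rh0 v x : Rh v 0 x = (x == v)%:R.
Proof. by rewrite /Rh E0 /= orbF. Qed.

Lemma RhS v n x : Rh v n.+1 x =
  if x == v then 1 else (deg x)%:R^-1 * \sum_(y <- nbrs x) Rh v n y.
Proof.
rewrite /Rh E_first /=; case: eqP => [->|_].
  under eq_bigr do rewrite E_one.
  by rewrite sum_const_seq mulr1 mulVf ?deg_neq0.
by [].
Qed.

Lemma Rh_bound v (f : vertex -> rat) :
  (forall x, 0 <= f x) -> 1 <= f v ->
  (forall x, x != v -> (deg x)%:R^-1 * \sum_(y <- nbrs x) f y <= f x) ->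
  forall n x, Rh v n x <= f x.
Proof.
move=> f0 fv fs; elim=> [|n IH] x.
  rewrite Rh0; case: eqP => [->|_] //.
rewrite RhS; case: eqP => [->|/eqP xv] //.
apply: le_trans (fs _ xv); rewrite ler_pM2l ?invr_gt0 ?ltr0n ?deg_gt0 //.
by apply: ler_sum => y _.
Qed.

Lemma transient_of v (f : vertex -> rat) (eps : rat) :
  (forall x, 0 <= f x) -> 1 <= f v ->
  (forall x, x != v -> (deg x)%:R^-1 * \sum_(y <- nbrs x) f y <= f x) ->
  (deg v)%:R^-1 * \sum_(y <- nbrs v) f y <= 1 - eps -> 0 <= 1 - eps ->
  forall n, return_prob v n <= 1 - eps.
Proof.
move=> f0 fv fs hv he [|n]; first by rewrite return_prob0.
rewrite return_probE; apply: le_trans hv.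
rewrite ler_pM2l ?invr_gt0 ?ltr0n ?deg_gt0 //.
by apply: ler_sum => y _; apply: Rh_bound.
Qed.

Definition Avg (f : vertex * vertex -> rat) (s : vertex * vertex) : rat :=
  (deg s.1)%:R^-1 * \sum_(x <- nbrs s.1)
     ((deg s.2)%:R^-1 * \sum_(y <- nbrs s.2) f (x, y)).

Lemma Avg_ext f g s : (forall s', f s' = g s') -> Avg f s = Avg g s.
Proof.
move=> h; rewrite /Avg; congr (_ * _); apply: eq_bigr => x _.
by congr (_ * _); apply: eq_bigr => y _.
Qed.

Lemma Avg_le f g (s : vertex * vertex) :
  (forall x y, x \in nbrs s.1 -> y \in nbrs s.2 -> f (x, y) <= g (x, y)) ->
  Avg f s <= Avg g s.
Proof.
move=> h; rewrite /Avg ler_pM2l ?invr_gt0 ?ltr0n ?deg_gt0 //.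
rewrite big_seq [X in _ <= X]big_seq; apply: ler_sum => x hx.
rewrite ler_pM2l ?invr_gt0 ?ltr0n ?deg_gt0 //.
rewrite big_seq [X in _ <= X]big_seq; apply: ler_sum => y hy.
exact: h.
Qed.

Lemma sum_lin (T : Type) (r : seq T) a b (F G : T -> rat) :
  \sum_(i <- r) (a * F i + b * G i) = a * \sum_(i <- r) F i + b * \sum_(i <- r) G i.
Proof. by rewrite big_split /= -!mulr_sumr. Qed.

Lemma Avg_lin a b f g s :
  Avg (fun s' => a * f s' + b * g s') s = a * Avg f s + b * Avg g s.
Proof.
rewrite /Avg.
under eq_bigr do rewrite sum_lin mulrDr !mulrA [_ * a]mulrC [_ * b]mulrC -!mulrA.
rewrite sum_lin; lra.
Qed.

Lemma Avg_const c s : Avg (fun _ => c) s = c.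
Proof.
rewrite /Avg; under eq_bigr do rewrite sum_const_seq mulrA mulVf ?deg_neq0 // mul1r.
by rewrite sum_const_seq mulrA mulVf ?deg_neq0 // mul1r.
Qed.

Lemma Avg_ge0 f s : (forall s', 0 <= f s') -> 0 <= Avg f s.
Proof.
move=> h; rewrite -(Avg_const 0 s); apply: Avg_le => x y _ _; exact: h.
Qed.

Fixpoint Q (n k : nat) (s : vertex * vertex) : rat :=
  match n with
  | 0 => (k == 0)%:R
  | n'.+1 => Avg (fun s' => Q n' (k - (s'.1 == s'.2)) s') s
  end.

Lemma meetings_cons d n x y p q :
  meetings d n.+1 (x :: p) (y :: q) =
  ((nth d p 0 == nth d q 0) + meetings d n p q)%N.
Proof.
rewrite /meetings /= -[2%N]/(1 + 1)%N iotaDl count_map.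
by congr (_ + _)%N.
Qed.

Lemma meet_sumE d n k x y :
  \sum_(p <- walks x n) \sum_(q <- walks y n)
     (if (k <= meetings d n p.1 q.1)%N then p.2 * q.2 else 0) = Q n k (x, y).
Proof.
have -> : \sum_(p <- walks x n) \sum_(q <- walks y n)
     (if (k <= meetings d n p.1 q.1)%N then p.2 * q.2 else 0) =
   E x n (fun P => E y n (fun Q => (k <= meetings d n P Q)%N%:R)).
  apply: eq_bigr => p _; rewrite /E mulr_sumr; apply: eq_bigr => q _.
  by case: ifP; rewrite ?mulr1 ?mulr0 // mulrCA mulr1.
elim: n k x y => [|n IH] k x y.
  by rewrite !E0 /meetings /= leqn0.
rewrite E_first /=; congr (_ * _); apply: eq_bigr => x' _.
rewrite {1}/E; under eq_bigr => p _ do rewrite E_first.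
under eq_bigr => p _ do rewrite mulrCA mulr_sumr.
rewrite -mulr_sumr exchange_big /=; congr (_ * _); apply: eq_bigr => y' _.
rewrite -IH /E; apply: eq_big_seq => p /walks_head [r hr]; congr (_ * _).
apply: eq_big_seq => q /walks_head [r' hr']; congr (_ * _).
by rewrite meetings_cons hr hr' /= leq_subLR.
Qed.

Lemma meet_probE v k n : meet_prob v k n = Q n k (v, v).
Proof. exact: meet_sumE. Qed.

Lemma Q_n0 n s : Q n 0 s = 1.
Proof.
elim: n s => [|n IH] s //=.
by rewrite -(Avg_const 1 s); apply: Avg_ext => s'; rewrite sub0n IH.
Qed.

Lemma Q_ge0 n k s : 0 <= Q n k s.
Proof. elim: n k s => [|n IH] k s /=; [exact: ler0n | exact: Avg_ge0]. Qed.

Lemma Q_le1 n k s : Q n k s <= 1.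
Proof.
elim: n k s => [|n IH] k s /=; first by case: (k == 0).
by rewrite -(Avg_const 1 s); apply: Avg_le.
Qed.

Lemma Q_mono n k s : Q n k s <= Q n.+1 k s.
Proof.
elim: n k s => [|n IH] k s.
  case: k => [|k]; first by rewrite !Q_n0.
  exact: Q_ge0.
by apply: Avg_le => x y _ _; apply: IH.
Qed.

Lemma Q_monoD n m k s : Q n k s <= Q (m + n) k s.
Proof.
elim: m => [|m IH] //; exact: le_trans IH (Q_mono _ _ _).
Qed.

Lemma nbrs_inl n x : x \in nbrs (inl n) ->
  exists m i, x = inr (m, i) /\ (m = n \/ m.+1 = n).
Proof.
rewrite /= mem_cat => /orP [/mapP [i _ ->]|].
  by exists n, i; split; [|left].
case: n => [|m] //= /mapP [i _ ->].
by exists m, i; split; [|right].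
Qed.

Lemma nbrs_inr m i x : x \in nbrs (inr (m, i)) -> x = inl m \/ x = inl m.+1.
Proof. by rewrite !inE => /orP [/eqP ->|/eqP ->]; [left|right]. Qed.

Lemma sum_iota_le (g : nat -> rat) N B : (forall j, g j <= B) ->
  \sum_(i <- iota 0 N) g i <= N%:R * B.
Proof.
move=> h; have := sum_const_seq (iota 0 N) B; rewrite size_iota => <-.
by apply: ler_sum => i _.
Qed.

Lemma sum_iota_ge (g : nat -> rat) N B : (forall j, B <= g j) ->
  N%:R * B <= \sum_(i <- iota 0 N) g i.
Proof.
move=> h; have := sum_const_seq (iota 0 N) B; rewrite size_iota => <-.
by apply: ler_sum => i _.
Qed.

Lemma sum_iota_ge0 (g : nat -> rat) N : (forall j, 0 <= g j) ->
  0 <= \sum_(i <- iota 0 N) g i.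
Proof. by move=> h; apply: sumr_ge0 => i _. Qed.

Lemma deg_inlS m : deg (inl m.+1) = (2 ^ m.+1 + 2 ^ m)%N.
Proof. by rewrite /deg /= size_cat !size_map !size_iota. Qed.

Lemma deg_inl0 : deg (inl 0) = 1%N.
Proof. by []. Qed.

Lemma sum_inlS m (f : vertex -> rat) : \sum_(x <- nbrs (inl m.+1)) f x =
  \sum_(i <- iota 0 (2 ^ m.+1)) f (inr (m.+1, i)) + \sum_(i <- iota 0 (2 ^ m)) f (inr (m, i)).
Proof. by rewrite [nbrs _]/= big_cat !big_map. Qed.

Lemma sum_inl0 (f : vertex -> rat) : \sum_(x <- nbrs (inl 0)) f x = f (inr (0, 0)).
Proof. by rewrite [nbrs _]/=; rewrite big_seq1. Qed.

Lemma pow2_gt0 m : 0 < (2 ^ m)%:R :> rat.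
Proof. by rewrite ltr0n expn_gt0. Qed.

Lemma avg_inl_ub n (f : vertex -> rat) B1 B0 :
  (forall j, f (inr (n, j)) <= B1) -> (forall j, f (inr (n.-1, j)) <= B0) ->
  (deg (inl n))%:R^-1 * \sum_(x <- nbrs (inl n)) f x <=
  if n is m.+1 then (2 * B1 + B0) / 3 else B1.
Proof.
case: n => [|m] h1 h0.
  by rewrite sum_inl0 deg_inl0 invr1 mul1r.
rewrite sum_inlS deg_inlS.
have s1 := @sum_iota_le (fun i => f (inr (m.+1, i))) (2 ^ m.+1) B1 h1.
have s0 := @sum_iota_le (fun i => f (inr (m, i))) (2 ^ m) B0 h0.
move: s1 s0; rewrite natrD expnS natrM.
set S1 := \sum_(_ <- _) _; set S0 := \sum_(_ <- _) _.
have t0 := pow2_gt0 m; set t := (2 ^ m)%:R in t0 *.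
move=> s1 s0.
have -> : (2%:R * t + t)^-1 * (S1 + S0) = (S1 + S0) / (3 * t).
  by field; lra.
rewrite ler_pdivrMr; last by lra.
have -> : (2 * B1 + B0) / 3 * (3 * t) = 2%:R * t * B1 + t * B0 by field.
lra.
Qed.

Lemma avg_inl_lb_same n (f : vertex -> rat) c :
  (forall x, x \in nbrs (inl n) -> 0 <= f x) -> 0 <= c ->
  (forall j, c <= f (inr (n, j))) ->
  2 / 3 * c <= (deg (inl n))%:R^-1 * \sum_(x <- nbrs (inl n)) f x.
Proof.
case: n => [|m] h0 hc h1.
  by rewrite sum_inl0 deg_inl0 invr1 mul1r; apply: le_trans (h1 0); lra.
rewrite sum_inlS deg_inlS.
have s1 := @sum_iota_ge (fun i => f (inr (m.+1, i))) (2 ^ m.+1) c h1.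
have s0 : 0 <= \sum_(i <- iota 0 (2 ^ m)) f (inr (m, i)).
  rewrite big_seq; apply: sumr_ge0 => i hi; apply: h0.
  by rewrite /= mem_cat; apply/orP; right; apply/mapP; exists i.
move: s1 s0; rewrite natrD expnS natrM.
set S1 := \sum_(_ <- _) _; set S0 := \sum_(_ <- _) _.
have t0 := pow2_gt0 m; set t := (2 ^ m)%:R in t0 *.
move=> s1 s0.
have -> : (2%:R * t + t)^-1 * (S1 + S0) = (S1 + S0) / (3 * t).
  by field; lra.
rewrite ler_pdivlMr; last by lra.
have -> : 2 / 3 * c * (3 * t) = 2%:R * t * c by field.
lra.
Qed.

Lemma avg_inl_lb_down m (f : vertex -> rat) c :
  (forall x, x \in nbrs (inl m.+1) -> 0 <= f x) -> 0 <= c ->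
  (forall j, c <= f (inr (m, j))) ->
  1 / 3 * c <= (deg (inl m.+1))%:R^-1 * \sum_(x <- nbrs (inl m.+1)) f x.
Proof.
move=> h0 hc h1.
rewrite sum_inlS deg_inlS.
have s1 := @sum_iota_ge (fun i => f (inr (m, i))) (2 ^ m) c h1.
have s0 : 0 <= \sum_(i <- iota 0 (2 ^ m.+1)) f (inr (m.+1, i)).
  rewrite big_seq; apply: sumr_ge0 => i hi; apply: h0.
  by rewrite /= mem_cat; apply/orP; left; apply/mapP; exists i.
move: s1 s0; rewrite natrD expnS natrM.
set S1 := \sum_(_ <- iota 0 (2 ^ m)) _; set S0 := \sum_(_ <- _) _.
have t0 := pow2_gt0 m; set t := (2 ^ m)%:R in t0 *.
move=> s1 s0.
have -> : (2%:R * t + t)^-1 * (S0 + S1) = (S0 + S1) / (3 * t).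
  by field; lra.
rewrite ler_pdivlMr; last by lra.
have -> : 1 / 3 * c * (3 * t) = t * c by field.
lra.
Qed.

Lemma avg_inr n i (f : vertex -> rat) :
  (deg (inr (n, i)))%:R^-1 * \sum_(x <- nbrs (inr (n, i))) f x =
  (f (inl n) + f (inl n.+1)) / 2.
Proof. by rewrite /deg /= !big_cons big_nil addr0 mulrC. Qed.

Lemma Avg_rr m i m' j f : Avg f (inr (m, i), inr (m', j)) =
  (f (inl m, inl m') + f (inl m, inl m'.+1) + f (inl m.+1, inl m') + f (inl m.+1, inl m'.+1)) / 4.
Proof.
rewrite /Avg /deg /= !big_cons !big_nil /=; lra.
Qed.

Definition kill (f : vertex * vertex -> rat) (s : vertex * vertex) : rat :=
  if s.1 == s.2 then 0 else f s.

Fixpoint K (T : nat) (f : vertex * vertex -> rat) (s : vertex * vertex) : rat :=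
  match T with
  | 0 => f s
  | T'.+1 => Avg (kill (K T' f)) s
  end.

Definition onef : vertex * vertex -> rat := fun _ => 1.

Lemma K_ext T f g s : (forall s', f s' = g s') -> K T f s = K T g s.
Proof.
move=> h; elim: T s => [|T IH] s //=.
by apply: Avg_ext => s'; rewrite /kill IH.
Qed.

Lemma K_add a b f s : K (a + b) f s = K a (K b f) s.
Proof.
elim: a s => [|a IH] s //=.
by apply: Avg_ext => s'; rewrite /kill IH.
Qed.

Lemma K_lin T a b f g s :
  K T (fun s' => a * f s' + b * g s') s = a * K T f s + b * K T g s.
Proof.
elim: T s => [|T IH] s //=.
rewrite -Avg_lin; apply: Avg_ext => s'; rewrite /kill.
by case: ifP => _; rewrite ?IH // !mulr0 addr0.
Qed.

Lemma K_ge0 T f s : (forall s', 0 <= f s') -> 0 <= K T f s.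
Proof.
move=> h; elim: T s => [|T IH] s //=.
by apply: Avg_ge0 => s'; rewrite /kill; case: ifP.
Qed.

Lemma K_one_le1 T s : K T onef s <= 1.
Proof.
elim: T s => [|T IH] s //=.
rewrite -(Avg_const 1 s); apply: Avg_le => x y _ _; rewrite /kill.
by case: ifP.
Qed.

Lemma K_one_ge0 T s : 0 <= K T onef s.
Proof. by apply: K_ge0. Qed.

Lemma K_one_dec T s : K T.+1 onef s <= K T onef s.
Proof.
elim: T s => [|T IH] s.
  by rewrite [K 0 _ _]/=; apply: K_one_le1.
apply: Avg_le => x y _ _; rewrite /kill; case: ifP => // _; exact: IH.
Qed.

Lemma K_one_decD T U s : K (U + T) onef s <= K T onef s.
Proof.
elim: U => [|U IH] //; exact: le_trans (K_one_dec _ _) IH.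
Qed.

Lemma Q1K n s : Q n 1 s = 1 - K n onef s.
Proof.
elim: n s => [|n IH] s; first by rewrite /= subrr.
rewrite /=.
have -> : 1 - Avg (kill (K n onef)) s = 1 * Avg (fun _ => 1) s + (-1) * Avg (kill (K n onef)) s.
  by rewrite Avg_const; lra.
rewrite -Avg_lin; apply: Avg_ext => s'; rewrite /kill.
by case: eqP => _ /=; rewrite ?Q_n0 ?IH; lra.
Qed.

Lemma KS_le T f g (s : vertex * vertex) :
  (forall x y, x \in nbrs s.1 -> y \in nbrs s.2 -> x != y -> K T f (x, y) <= K T g (x, y)) ->
  K T.+1 f s <= K T.+1 g s.
Proof.
move=> h; apply: Avg_le => x y hx hy; rewrite /kill /=.
by case: eqP => [//|/eqP ne]; apply: h.
Qed.

Lemma KS_ub T f (s : vertex * vertex) c : 0 <= c ->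
  (forall x y, x \in nbrs s.1 -> y \in nbrs s.2 -> x != y -> K T f (x, y) <= c) ->
  K T.+1 f s <= c.
Proof.
move=> c0 h; rewrite -(Avg_const c s) /=; apply: Avg_le => x y hx hy; rewrite /kill /=.
by case: eqP => [//|/eqP ne]; apply: h.
Qed.

Definition Vz (z : int) : rat := if z == 0 then 0 else `|z|%:~R + 1.

Lemma Vz_pos z : 0 < z -> Vz z = z%:~R + 1.
Proof. by move=> h; rewrite /Vz gt_eqF // gtr0_norm. Qed.

Lemma Vz_neg z : z < 0 -> Vz z = - z%:~R + 1.
Proof. by move=> h; rewrite /Vz lt_eqF // ltr0_norm // intrN. Qed.

Lemma Vz_zero z : z = 0 -> Vz z = 0.
Proof. by move=> ->. Qed.

Lemma Vz_ge0 z : 0 <= Vz z.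
Proof.
rewrite /Vz; case: eqP => // _.
have : (0 : rat) <= `|z|%:~R by rewrite ler0z normr_ge0.
lra.
Qed.

Definition W (e : int) : rat := (Vz e + Vz (e - 1) + Vz (e + 1) + Vz e) / 4.

Ltac vz := repeat match goal with |- context [Vz ?z] =>
  first [ rewrite (@Vz_pos z); last lia
        | rewrite (@Vz_neg z); last lia
        | rewrite (@Vz_zero z); last lia ] end.

Lemma cases6 (d : int) : (d <= -3 \/ d = -2 \/ d = -1 \/ d = 0 \/ d = 1 \/ d = 2 \/ 3 <= d)%R.
Proof. lia. Qed.

Lemma key_ii (d : int) : d != 0 ->
  (2 * ((2 * W d + W (d + 1)) / 3) + (2 * W (d - 1) + W d) / 3) / 3 <= Vz d.
Proof.
rewrite /W; case: (cases6 d) => [h|[->|[->|[->|[->|[->|h]]]]]] hd;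
  try (exfalso; lia); vz; rewrite ?intrD ?intrB ?intrN; lra.
Qed.

Lemma key_0i (e : int) : (e <= -1)%R -> (2 * W e + W (e + 1)) / 3 <= Vz e.
Proof.
rewrite /W; case: (cases6 e) => [h|[->|[->|[->|[->|[->|h]]]]]] hd;
  try (exfalso; lia); vz; rewrite ?intrD ?intrB ?intrN; lra.
Qed.

Lemma key_i0 (e : int) : (1 <= e)%R -> (2 * W e + W (e - 1)) / 3 <= Vz e.
Proof.
rewrite /W; case: (cases6 e) => [h|[->|[->|[->|[->|[->|h]]]]]] hd;
  try (exfalso; lia); vz; rewrite ?intrD ?intrB ?intrN; lra.
Qed.

Definition Vp (s : vertex * vertex) : rat :=
  match s with (inl a, inl b) => Vz (a%:Z - b%:Z) | _ => 0 end.

Lemma Vp_ge0 s : 0 <= Vp s.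
Proof. by case: s => [[a|[]] [b|[]]] //=; apply: Vz_ge0. Qed.

Lemma Vz_ext x y : x = y -> Vz x = Vz y.
Proof. by move=> ->. Qed.

Lemma W_ext x y : x = y -> W x = W y.
Proof. by move=> ->. Qed.

Lemma Avg_Vp_rr m i m' j : Avg Vp (inr (m, i), inr (m', j)) = W (m%:Z - m'%:Z).
Proof.
rewrite Avg_rr /W /=.
congr (_ / 4); congr (_ + _ + _ + _); apply: Vz_ext; lia.
Qed.

Definition Gf (h : nat -> nat -> rat) (b m : nat) : rat :=
  if b is b'.+1 then (2 * h m b + h m b') / 3 else h m 0.

Definition Lg (h : nat -> nat -> rat) (a b : nat) : rat :=
  if a is a'.+1 then (2 * Gf h b a + Gf h b a') / 3 else Gf h b 0.

Lemma inner_ub (g : vertex * vertex -> rat) (h : nat -> nat -> rat) b x m :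
  (forall i m' j, g (inr (m, i), inr (m', j)) <= h m m') ->
  (exists i, x = inr (m, i)) ->
  (deg (inl b))%:R^-1 * \sum_(y <- nbrs (inl b)) g (x, y) <= Gf h b m.
Proof.
move=> hg [i ->]; rewrite /Gf.
have := avg_inl_ub (n := b) (f := fun y => g (inr (m, i), y)) (B1 := h m b) (B0 := h m b.-1).
by case: b => [|b] H; apply: H => j; apply: hg.
Qed.

Lemma pair_ub (g : vertex * vertex -> rat) (h : nat -> nat -> rat) a b :
  (forall m i m' j, g (inr (m, i), inr (m', j)) <= h m m') ->
  Avg g (inl a, inl b) <= Lg h a b.
Proof.
move=> hg; rewrite /Avg /Lg.
have := avg_inl_ub (n := a)
  (f := fun x => (deg (inl b))%:R^-1 * \sum_(y <- nbrs (inl b)) g (x, y))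
  (B1 := Gf h b a) (B0 := Gf h b a.-1).
case: a => [|a] H; apply: H => j; apply: inner_ub; by [apply: hg | exists j].
Qed.

Lemma key_ii_gen (d e1 e2 e3 : int) : e1 = d + 1 -> e2 = d - 1 -> e3 = d -> d != 0 ->
  (2 * ((2 * W d + W e1) / 3) + (2 * W e2 + W e3) / 3) / 3 <= Vz d.
Proof. by move=> -> -> ->; apply: key_ii. Qed.

Lemma key_0i_gen (e e1 : int) : e1 = e + 1 -> (e <= -1)%R -> (2 * W e + W e1) / 3 <= Vz e.
Proof. by move=> ->; apply: key_0i. Qed.

Lemma key_i0_gen (e e1 : int) : e1 = e - 1 -> (1 <= e)%R -> (2 * W e + W e1) / 3 <= Vz e.
Proof. by move=> ->; apply: key_i0. Qed.

Lemma K1_le_Avg f s : (forall s', 0 <= f s') -> K 1 f s <= Avg f s.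
Proof.
move=> h; apply: Avg_le => x y _ _; rewrite /kill; case: ifP => _ //=.
Qed.

Lemma K2_Vp (a b : nat) : a != b -> K 2 Vp (inl a, inl b) <= Vp (inl a, inl b).
Proof.
move=> ab.
have step : K 2 Vp (inl a, inl b) <= Avg (Avg Vp) (inl a, inl b).
  apply: Avg_le => x y _ _; rewrite /kill; case: ifP => _.
    by apply: Avg_ge0 => s'; apply: Vp_ge0.
  by apply: K1_le_Avg; apply: Vp_ge0.

apply: le_trans step _.
apply: (le_trans (pair_ub (g := Avg Vp) (h := fun m mm => W (m%:Z - mm%:Z)) a b _)).
  by move=> m i m' j; rewrite Avg_Vp_rr.
rewrite /Lg /Gf /=.
case: a ab => [|a]; case: b => [|b] //= ab.
- apply: key_0i_gen; lia.
- apply: key_i0_gen; lia.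
- apply: key_ii_gen; lia.
Qed.

Lemma K2_mono f g (a b : nat) :
  (forall a' b', a' != b' -> f (inl a', inl b') <= g (inl a', inl b')) ->
  K 2 f (inl a, inl b) <= K 2 g (inl a, inl b).
Proof.
move=> h; apply: KS_le => x y /nbrs_inl [m [i [-> _]]] /nbrs_inl [m' [j [-> _]]] _.
apply: KS_le => x' y' /nbrs_inr [->|->] /nbrs_inr [->|->] /= ne; apply: h;
  by apply: contra ne => /eqP ->.
Qed.

Lemma K2j_mono j f g (a b : nat) :
  (forall a' b', a' != b' -> f (inl a', inl b') <= g (inl a', inl b')) ->
  a != b -> K (2 * j) f (inl a, inl b) <= K (2 * j) g (inl a, inl b).
Proof.
move=> h; elim: j a b => [|j IH] a b ab; first by apply: h.
rewrite mulnS !K_add; apply: K2_mono => a' b' ne; exact: IH.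
Qed.

Lemma K2j_Vp j (a b : nat) : a != b -> K (2 * j) Vp (inl a, inl b) <= Vp (inl a, inl b).
Proof.
elim: j a b => [|j IH] a b ab; first by rewrite muln0.
rewrite mulnS K_add; apply: le_trans (K2_Vp ab).
by apply: K2_mono => a' b' ne; apply: IH.
Qed.

Lemma inner_ge0 (g : vertex * vertex -> rat) b x :
  (forall s', 0 <= g s') -> 0 <= (deg (inl b))%:R^-1 * \sum_(y <- nbrs (inl b)) g (x, y).
Proof.
move=> h; apply: mulr_ge0; first by rewrite invr_ge0 ler0n.
by apply: sumr_ge0 => y _.
Qed.

Lemma pair_lb1 (g : vertex * vertex -> rat) m b c :
  (forall s', 0 <= g s') -> 0 <= c ->
  (forall i k, c <= g (inr (m, i), inr (b, k))) ->
  2 / 9 * c <= Avg g (inl m.+1, inl b).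
Proof.
move=> g0 c0 hc; rewrite /Avg.
have H := avg_inl_lb_down (m := m)
  (f := fun x => (deg (inl b))%:R^-1 * \sum_(y <- nbrs (inl b)) g (x, y)) (c := 2 / 3 * c).
have -> : 2 / 9 * c = 1 / 3 * (2 / 3 * c) by lra.
apply: H.
- by move=> x _; apply: inner_ge0.
- lra.
- move=> i; apply: avg_inl_lb_same; try done; by move=> y _; apply: g0.
Qed.

Lemma pair_lb2 (g : vertex * vertex -> rat) a m c :
  (forall s', 0 <= g s') -> 0 <= c ->
  (forall i k, c <= g (inr (a, i), inr (m, k))) ->
  2 / 9 * c <= Avg g (inl a, inl m.+1).
Proof.
move=> g0 c0 hc; rewrite /Avg.
have H := avg_inl_lb_same (n := a)
  (f := fun x => (deg (inl m.+1))%:R^-1 * \sum_(y <- nbrs (inl m.+1)) g (x, y)) (c := 1 / 3 * c).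
have -> : 2 / 9 * c = 2 / 3 * (1 / 3 * c) by lra.
apply: H.
- by move=> x _; apply: inner_ge0.
- lra.
- move=> i; apply: avg_inl_lb_down; try done; by move=> y _; apply: g0.
Qed.

Lemma mid_lb (g : vertex * vertex -> rat) m i m' j :
  (forall s', 0 <= g s') -> 1 / 4 * g (inl m, inl m') <= Avg g (inr (m, i), inr (m', j)).
Proof.
move=> g0; rewrite Avg_rr.
have := g0 (inl m, inl m'.+1); have := g0 (inl m.+1, inl m'); have := g0 (inl m.+1, inl m'.+1).
lra.
Qed.

Lemma one_minus_Avg f s : 1 - Avg f s = Avg (fun s' => 1 - f s') s.
Proof.
rewrite (Avg_ext (f := fun s' => 1 - f s') (g := fun s' => 1 * (fun _ => 1) s' + (-1) * f s')); last by move=> s' /=; lra.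
by rewrite Avg_lin Avg_const; lra.
Qed.

Definition q18 : rat := 18^-1.

Lemma q18_gt0 : 0 < q18.
Proof. rewrite /q18; lra. Qed.
Lemma q18_ge0 : 0 <= q18.
Proof. rewrite /q18; lra. Qed.
Lemma q18_le1 : q18 <= 1.
Proof. rewrite /q18; lra. Qed.

Lemma q_bounds j : 0 <= q18 ^+ j <= 1.
Proof.
apply/andP; split; first by apply: exprn_ge0; exact: q18_ge0.
by apply: exprn_ile1; [exact: q18_ge0 | exact: q18_le1].
Qed.

Lemma g_ge0 T s : 0 <= 1 - kill (K T onef) s.
Proof.
rewrite /kill; case: ifP => _; first lra.
have := K_one_le1 T s; lra.
Qed.

Lemma hit j : forall a b, (a = b + j \/ b = a + j)%N ->
  q18 ^+ j <= 1 - kill (K (2 * j) onef) (inl a, inl b).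
Proof.
elim: j => [|j IH] a b hab.
  have -> : a = b by lia.
  by rewrite /kill /= eqxx expr0; lra.
have ne : (inl a != inl b :> vertex) by apply/eqP => [[]]; lia.
have -> : (2 * j.+1 = (2 * j).+2)%N by lia.
rewrite /kill [_.1]/= [_.2]/= (negbTE ne).
rewrite [K _.+2 _ _]/= one_minus_Avg.
have mid : forall m i m' k, (m = m' + j \/ m' = m + j)%N ->
    1 / 4 * q18 ^+ j <= 1 - kill (K (2 * j).+1 onef) (inr (m, i), inr (m', k)).
  move=> m i m' k hm.
  have := K_one_ge0 (2 * j).+1 (inr (m, i), inr (m', k)).
  rewrite /kill /=; case: ifP => _ h0; first by case/andP: (q_bounds j); lra.
  rewrite one_minus_Avg.
  apply: le_trans (mid_lb (g := fun s'' => 1 - kill (K (2 * j) onef) s'') m i m' k _); last first.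
    by move=> s'; apply: g_ge0.
  have := IH m m' hm; lra.
have qj0 : 0 <= q18 ^+ j by apply: exprn_ge0; exact: q18_ge0.
case: hab => hab.
- have -> : a = (b + j).+1 by lia.
  have -> : q18 ^+ j.+1 = 2 / 9 * (1 / 4 * q18 ^+ j) by rewrite exprS /q18; lra.
  apply: pair_lb1; first by move=> s'; apply: (g_ge0 (2 * j).+1).
    lra.
  by move=> i k; apply: mid; left.
- have -> : b = (a + j).+1 by lia.
  have -> : q18 ^+ j.+1 = 2 / 9 * (1 / 4 * q18 ^+ j) by rewrite exprS /q18; lra.
  apply: pair_lb2; first by move=> s'; apply: (g_ge0 (2 * j).+1).
    lra.
  by move=> i k; apply: mid; right.
Qed.

Lemma hitM M (a b : nat) : a != b -> (a <= b + M)%N -> (b <= a + M)%N ->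
  K (2 * M) onef (inl a, inl b) <= 1 - q18 ^+ M.
Proof.
move=> ab h1 h2.
have [j [hj jM]] : exists j, (a = b + j \/ b = a + j)%N /\ (j <= M)%N.
  case: (leqP a b) => hab.
    by exists (b - a)%N; split; lia.
  by exists (a - b)%N; split; lia.
have := hit hj.
have ne : (inl a != inl b :> vertex) by apply/eqP => [[]] /eqP; rewrite (negbTE ab).
rewrite /kill [_.1]/= [_.2]/= (negbTE ne) => H.
have -> : (2 * M = (2 * M - 2 * j) + 2 * j)%N by lia.
apply: le_trans (K_one_decD _ _ _) _.
have : q18 ^+ M <= q18 ^+ j by apply: ler_wiXn2l; [exact: q18_ge0 | exact: q18_le1 | done].
lra.
Qed.

Lemma Vz_nat_le (a b D : nat) : (a <= b + D)%N -> (b <= a + D)%N ->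
  Vz (a%:Z - b%:Z) <= D%:R + 1.
Proof.
move=> h1 h2; rewrite /Vz; case: eqP => _; first by have : (0:rat) <= D%:R by []; lra.
have : `|a%:Z - b%:Z| <= D%:Z by lia.
rewrite -(ler_int rat) => H; lra.
Qed.

Lemma Vz_nat_ge (a b M : nat) : (a + M < b \/ b + M < a)%N ->
  M%:R + 1 <= Vz (a%:Z - b%:Z).
Proof.
move=> h; rewrite /Vz; case: eqP => [?|_]; first by exfalso; lia.
have : M%:Z <= `|a%:Z - b%:Z| by lia.
rewrite -(ler_int rat) => H; lra.
Qed.

Lemma block M k (a b : nat) : a != b ->
  K (2 * M * k) onef (inl a, inl b) <= Vp (inl a, inl b) / (M%:R + 1) + (1 - q18 ^+ M) ^+ k.
Proof.
have M1 : 0 < M%:R + 1 :> rat by have : (0:rat) <= M%:R by []; lra.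
have r0 : 0 <= 1 - q18 ^+ M by case/andP: (q_bounds M); lra.
elim: k a b => [|k IH] a b ab.
  rewrite muln0 /= expr0 /onef.
  have : 0 <= Vz (a%:Z - b%:Z) / (M%:R + 1) by apply: divr_ge0; [apply: Vz_ge0|lra].
  lra.
have [near|far] := boolP ((a <= b + M)%N && (b <= a + M)%N).
  case/andP: near => h1 h2.
  rewrite mulnS K_add.
  apply: le_trans (@K2j_mono M _ ( fun s => (M%:R + 1)^-1 * Vp s + (1 - q18 ^+ M) ^+ k * onef s) _ _ _ ab) _.
    by move=> a' b' ne; rewrite /onef mulr1 mulrC; apply: IH.
  rewrite K_lin.
  have := K2j_Vp M ab; have := hitM ab h1 h2.
  have := exprn_ge0 k r0.
  set V := Vp _; set X := K _ Vp _; set Y := K _ onef _; set R := (_ ^+ k).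
  move=> R0 hY hX.
  rewrite exprS -/R.
  have : (M%:R + 1)^-1 * X <= V / (M%:R + 1).
    by rewrite mulrC ler_pM2r ?invr_gt0.
  nra.
apply: le_trans (K_one_le1 _ _) _.
have : M%:R + 1 <= Vp (inl a, inl b) by apply: Vz_nat_ge; lia.
have := exprn_ge0 k.+1 r0.
move=> h h'.
have : 1 <= Vp (inl a, inl b) / (M%:R + 1) by rewrite ler_pdivlMr // mul1r.
lra.
Qed.

Lemma bernoulli (q : rat) k : 0 <= q <= 1 -> (1 - q) ^+ k * (1 + k%:R * q) <= 1.
Proof.
case/andP=> q0 q1; elim: k => [|k IH]; first by rewrite expr0 mul0r; lra.
rewrite exprS -mulrA.
have A0 : 0 <= (1 - q) ^+ k by apply: exprn_ge0; lra.
have : (1 - q) * (1 + k.+1%:R * q) <= 1 + k%:R * q.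
  rewrite -addn1 natrD.
  have : 0 <= k%:R * q * q :> rat by apply: mulr_ge0; [apply: mulr_ge0|].
  nra.
move=> h; apply: le_trans IH; nra.
Qed.

Lemma nat_big (x : rat) : exists n : nat, x <= n%:R.
Proof.
case: (lerP 0 x) => hx.
  by exists (Num.Def.archi_bound x); apply/ltW/archi_boundP.
by exists 0%N; apply/ltW.
Qed.

Lemma geo_small (q eps : rat) : 0 < q <= 1 -> 0 < eps ->
  exists k : nat, (1 - q) ^+ k <= eps.
Proof.
case/andP=> q0 q1 e0.
have [k hk] := nat_big (q^-1 * eps^-1).
exists k.
have hb := bernoulli k (_ : 0 <= q <= 1).
have A0 : 0 <= (1 - q) ^+ k by apply: exprn_ge0; lra.
have qe : 0 < q * eps by apply: mulr_gt0.
have : 1 <= k%:R * (q * eps).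
  have H := ler_wpM2r (ltW qe) hk.
  have E1 : q^-1 / eps * (q * eps) = 1.
    by field; apply/andP; split; apply: lt0r_neq0.
  by rewrite E1 in H.
move=> h2.
have := hb (ltac:(apply/andP; split; lra)).
nra.
Qed.

Lemma U_lemma (eps : rat) (D : nat) : 0 < eps ->
  exists n, forall a b : nat, a != b -> (a <= b + D)%N -> (b <= a + D)%N ->
    K n onef (inl a, inl b) <= eps.
Proof.
move=> e0.
have [M hM] := nat_big (2 * (D%:R + 1) / eps).
have qM : 0 < q18 ^+ M <= 1.
  apply/andP; split; first by apply: exprn_gt0; exact: q18_gt0.
  by case/andP: (q_bounds M).
have e2 : 0 < eps / 2 by lra.
have [k hk] := geo_small qM e2.
exists (2 * M * k)%N => a b ab h1 h2.
apply: le_trans (block M k ab) _.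
have hV := Vz_nat_le h1 h2.
have hV0 := Vz_ge0 (a%:Z - b%:Z).
have M1 : 0 < M%:R + 1 :> rat by have : (0:rat) <= M%:R by []; lra.
have : Vp (inl a, inl b) / (M%:R + 1) <= eps / 2.
  rewrite ler_pdivrMr // /=.
  have : 2 * (D%:R + 1) <= M%:R * eps.
    by move: hM; rewrite ler_pdivrMr.
  nra.
lra.
Qed.

Definition lev (x : vertex) : nat := match x with inl n => n | inr (n, _) => n end.

Lemma lev_nbrs x y : y \in nbrs x -> (lev y <= (lev x).+1)%N.
Proof.
case: x => [n|[m i]].
  by case/nbrs_inl => m' [i' [-> h]] /=; lia.
by case/nbrs_inr => -> /=; lia.
Qed.

Lemma inl_neq (a b : nat) : (inl a != inl b :> vertex) -> a != b.
Proof. by apply: contra => /eqP ->. Qed.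

Lemma C1 (eps : rat) : 0 < eps -> exists N, forall w, 1 - eps <= Q N 1 (w, w).
Proof.
move=> e0; have [n hn] := U_lemma 4 e0.
exists (n + 2)%N => w; rewrite Q1K.
suff : K (n + 2) onef (w, w) <= eps by lra.
case: w => [a|[m i]].
- rewrite addnC K_add.
  apply: (@KS_ub 1) => //; first lra.
  move=> x y /nbrs_inl [m1 [i1 [-> h1]]] /nbrs_inl [m2 [i2 [-> h2]]] _.
  apply: (@KS_ub 0) => //; first lra.
  move=> x' y' /nbrs_inr hx /nbrs_inr hy.
  case: hx => ->; case: hy => -> ne;
    (apply: hn; [exact: inl_neq ne | lia | lia]).
- have -> : (n + 2 = (1 + n).+1)%N by lia.
  apply: le_trans (K_one_dec _ _) _.
  rewrite K_add.
  apply: (@KS_ub 0) => //; first lra.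
  move=> x' y' /nbrs_inr hx /nbrs_inr hy.
  case: hx => ->; case: hy => -> ne;
    (apply: hn; [exact: inl_neq ne | lia | lia]).
Qed.

Lemma Avg_scale c f s : c * Avg f s = Avg (fun s' => c * f s') s.
Proof.
rewrite (Avg_ext (f := fun s' => c * f s') (g := fun s' => c * f s' + 0 * f s')); last first.
  by move=> s'; rewrite mul0r addr0.
by rewrite Avg_lin mul0r addr0.
Qed.

Lemma Q_step n m k (d : rat) : 0 <= d ->
  forall L0 x y, (lev x <= L0)%N -> (lev y <= L0)%N ->
  (forall w, (lev w <= L0 + n)%N -> d <= Q m k (w, w)) ->
  d * Q n 1 (x, y) <= Q (n + m) k.+1 (x, y).
Proof.
move=> d0; elim: n => [|n IH] L0 x y hx hy hw.
  by rewrite /= mulr0; apply: Q_ge0.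
rewrite addSn /=.
rewrite Avg_scale; apply: Avg_le => x' y' hx' hy' /=.
have lx := lev_nbrs hx'; have ly := lev_nbrs hy'.
move: lx ly; rewrite [(_, _).1]/= [(_, _).2]/= => lx ly.
case: eqP => [<-|/eqP ne] /=.
  rewrite subnn Q_n0 mulr1 subSS subn0.
  apply: le_trans (hw x' _) _; first lia.
  by apply: Q_monoD.
rewrite !subn0.
apply: (IH L0.+1); try lia.
move=> w hlw; apply: hw; lia.
Qed.

Lemma Ck k : forall (eps : rat) L, 0 < eps ->
  exists N, forall w, (lev w <= L)%N -> 1 - eps <= Q N k.+1 (w, w).
Proof.
elim: k => [|k IH] eps L e0.
  by have [N hN] := C1 e0; exists N => w _; apply: hN.
case: (lerP eps 1) => e1; last first.
  by exists 0%N => w _; have := Q_ge0 0 k.+2 (w, w); lra.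
have e2 : 0 < eps / 2 by lra.
have [N1 h1] := C1 e2.
have [N2 h2] := IH (eps / 2) (L + N1)%N e2.
exists (N1 + N2)%N => w hw.
have := @Q_step N1 N2 k.+1 (1 - eps / 2) (ltac:(lra)) L w w hw hw.
move=> H; have {}H := H (fun w' hw' => h2 w' hw').
have := h1 w.
nra.
Qed.

Theorem meet_part : G_meet_io_as.
Proof.
move=> v _ k eps e0.
case: k => [|k].
  by exists 0%N; rewrite meet_probE Q_n0; lra.
have [N hN] := Ck k (lev v) e0.
by exists N; rewrite meet_probE; apply: hN.
Qed.

Definition hh (k n : nat) : rat := if (n <= k)%N then 1 else (2^-1) ^+ (n - k).

Lemma hh_le k n : (n <= k)%N -> hh k n = 1.
Proof. by rewrite /hh => ->. Qed.

Lemma hh_S k n : (k <= n)%N -> hh k n.+1 = hh k n / 2.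
Proof.
move=> h; rewrite /hh.
case: (leqP n.+1 k) => h1; first lia.
case: (leqP n k) => h2.
  have -> : (n.+1 - k = 1)%N by lia.
  by rewrite expr1 mul1r.
have -> : (n.+1 - k = (n - k).+1)%N by lia.
by rewrite exprSr.
Qed.

Lemma half_ge0 : 0 <= 2^-1 :> rat. Proof. lra. Qed.
Lemma half_le1 : 2^-1 <= 1 :> rat. Proof. lra. Qed.

Lemma hh_ge0 k n : 0 <= hh k n.
Proof. rewrite /hh; case: ifP => _; first lra. exact: exprn_ge0 half_ge0. Qed.

Definition fk (k : nat) (x : vertex) : rat :=
  match x with inl n => hh k n | inr (m, _) => (hh k m + hh k m.+1) / 2 end.

Lemma transient_inl k : exists eps : rat, 0 < eps /\ forall n, return_prob (inl k) n <= 1 - eps.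
Proof.
exists (1/6); split; first lra.
apply: (transient_of (f := fk k)).
- by case=> [n|[m i]] /=; [apply: hh_ge0 | have := hh_ge0 k m; have := hh_ge0 k m.+1; lra].
- by rewrite /fk hh_le.
- case=> [n|[m i]] hx; last by rewrite avg_inr /=; lra.
  have kn : n != k by apply: contra hx => /eqP ->.
  apply: le_trans (avg_inl_ub (B1 := (hh k n + hh k n.+1) / 2)
                              (B0 := (hh k n.-1 + hh k n.-1.+1) / 2) _ _) _.
  + by move=> j.
  + by move=> j.
  case: n hx kn => [|m] _ kn /=.
    by rewrite !hh_le; [lra | lia ..].
  case: (leqP m.+2 k) => h.
    by rewrite !hh_le; [lra | lia ..].
  have km : (k <= m)%N by lia.
  rewrite (hh_S (n := m.+1)); last lia.
  rewrite (hh_S (n := m)); last lia.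
  have := hh_ge0 k m; lra.
- apply: le_trans (avg_inl_ub (B1 := (hh k k + hh k k.+1) / 2)
                              (B0 := (hh k k.-1 + hh k k.-1.+1) / 2) _ _) _.
  + by move=> j.
  + by move=> j.
  rewrite (hh_S (n := k)); last exact: leqnn.
  rewrite (hh_le (n := k)); last exact: leqnn.
  case: k => [|k]; first lra.
  rewrite [k.+1.-1]/= (hh_le (n := k)); last lia.
  rewrite (hh_le (n := k.+1)); last exact: leqnn.
  lra.
- lra.
Qed.

Definition gg (k n : nat) : rat :=
  if (n <= k)%N then 1 else 3 / 4 * (2^-1) ^+ (n - k.+1).

Lemma gg_le k n : (n <= k)%N -> gg k n = 1.
Proof. by rewrite /gg => ->. Qed.

Lemma gg_k1 k : gg k k.+1 = 3 / 4.
Proof. by rewrite /gg ltnn subnn expr0 mulr1. Qed.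

Lemma gg_S k n : (k < n)%N -> gg k n.+1 = gg k n / 2.
Proof.
move=> h; rewrite /gg.
case: (leqP n.+1 k) => h1; first lia.
case: (leqP n k) => h2; first lia.
have -> : (n.+1 - k.+1 = (n - k.+1).+1)%N by lia.
by rewrite exprSr; lra.
Qed.

Lemma gg_ge0 k n : 0 <= gg k n.
Proof.
rewrite /gg; case: ifP => _; first lra.
have := exprn_ge0 (n - k.+1) half_ge0; lra.
Qed.

Lemma gg_le1 k n : gg k n <= 1.
Proof.
rewrite /gg; case: ifP => _; first lra.
have := exprn_ile1 (n - k.+1) half_ge0 half_le1.
have := exprn_ge0 (n - k.+1) half_ge0; lra.
Qed.

Definition fm (k i0 : nat) (x : vertex) : rat :=
  match x with
  | inl n => gg k n
  | inr (m, j) => if (m == k) && (j == i0) then 1 else (gg k m + gg k m.+1) / 2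
  end.

Lemma fm_ub k i0 m j : fm k i0 (inr (m, j)) <= if m == k then 1 else (gg k m + gg k m.+1) / 2.
Proof.
rewrite /fm; case: (eqVneq m k) => [->|mk].
  rewrite ?eqxx /=; case: ifP => _; first exact: lexx.
  have := gg_le1 k k; have := gg_le1 k k.+1; lra.
rewrite ?(negbTE mk) /=; exact: lexx.
Qed.

Lemma fm_le1 k i0 x : fm k i0 x <= 1.
Proof.
case: x => [n|[m j]] /=; first exact: gg_le1.
case: ifP => _; first lra. have := gg_le1 k m; have := gg_le1 k m.+1; lra.
Qed.

Lemma transient_inr k i0 : exists eps : rat, 0 < eps /\
  forall n, return_prob (inr (k, i0)) n <= 1 - eps.
Proof.
exists (1/8); split; first lra.
apply: (transient_of (f := fm k i0)).
- case=> [n|[m j]] /=; first exact: gg_ge0.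
  by case: ifP => _; [lra | have := gg_ge0 k m; have := gg_ge0 k m.+1; lra].
- by rewrite /fm !eqxx.
- case=> [n|[m j]] hx; last first.
    rewrite avg_inr /fm.
    have -> : ((m == k) && (j == i0)) = false.
      by apply/negbTE; apply: contra hx => /andP [/eqP -> /eqP ->].
    by [].
  case: (leqP n k) => hn.
    rewrite [fm _ _ (inl n)]/= gg_le; last exact: hn.
    apply: le_trans (avg_inl_ub (B1 := 1) (B0 := 1) _ _) _.
    + by move=> j; apply: fm_le1.
    + by move=> j; apply: fm_le1.
    by case: n {hx hn} => [|n]; lra.
  case: n hx hn => [|m] // _ hm.
  apply: le_trans (avg_inl_ub (B1 := if m.+1 == k then 1 else (gg k m.+1 + gg k m.+2) / 2)
                              (B0 := if m == k then 1 else (gg k m + gg k m.+1) / 2) _ _) _.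
  + by move=> j; apply: fm_ub.
  + by move=> j; apply: fm_ub.
  have -> : (m.+1 == k) = false by apply/eqP; lia.
  rewrite [fm _ _ (inl _)]/=.
  case: (eqVneq m k) => [->|mk].
    rewrite gg_k1 (gg_S (n := k.+1)); last exact: ltnSn.
    rewrite gg_k1; lra.
  have km : (k < m)%N by lia.
  rewrite (gg_S (n := m.+1)); last lia.
  rewrite (gg_S (n := m)); last lia.
  have := gg_ge0 k m; lra.
- rewrite avg_inr [fm _ _ (inl _)]/= [fm _ _ (inl _)]/= gg_k1 (gg_le (n := k)); last exact: leqnn.
  lra.
- lra.
Qed.

Theorem transient_part : G_transient.
Proof.
move=> [k|[k i]] _; [exact: transient_inl | exact: transient_inr].
Qed.


Theorem mainTheorem11 : G_transient /\ G_meet_io_as.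
Proof. split; [exact: transient_part | exact: meet_part]. Qed.
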